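(* Let $R$ be a ring, $M$ a nonzero left $R$-module, $\Omega$ an infinite set, $N$ either $\bigoplus_{i\in\Omega} M$ or $\prod_{i\in\Omega} M$, and $E=\mathrm{End}_R(N)$. Suppose that $U\subseteq E$ is a subset for which there exists a moiety $\Sigma\subseteq\Omega$ that is full with respect to $U$. Then there exist elements $x,y\in E$ such that $$E = yUy + yUyx + xyUy + xyUyx,$$ that is, every $f\in E$ can be written as $f = y u_1 y + y u_2 y x + x y u_3 y + x y u_4 y x$ for some $u_1,u_2,u_3,u_4\in U$.
   Context: Rings are unital and associative. Endomorphisms are written on the right of their arguments, so the product $fg$ in $E$ means ''first $f$, then $g$''. For $\Sigma\subseteq\Omega$, $M^{\Sigma}$ denotes the $R$-submodule of $N$ consisting of elements supported on the coordinates in $\Sigma$ (so $N = M^{\Sigma}\oplus M^{\Omega\setminus\Sigma}$). For $U\subseteq E$, let $U_{\{\Sigma\}}=\{f\in U : M^{\Sigma}f\subseteq M^{\Sigma},\ M^{\Omega\setminus\Sigma}f\subseteq M^{\Omega\setminus\Sigma}\}$. A subset $\Sigma\subseteq\Omega$ is called full with respect to $U\subseteq E$ if every $R$-endomorphism of $M^{\Sigma}$ is the restriction to $M^{\Sigma}$ of some member of $U_{\{\Sigma\}}$. A subset $\Sigma\subseteq\Omega$ is a moiety if $|\Sigma|=|\Omega|=|\Omega\setminus\Sigma|$. For subsets $A,B\subseteq E$, $A+B=\{a+b : a\in A, b\in B\}$ and $yAy=\{yay : a\in A\}$, etc. *)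

(* Defs.v *)
From mathcomp Require Import all_boot all_algebra.
From Stdlib Require Import List.
Set Implicit Arguments. Unset Strict Implicit. Unset Printing Implicit Defensive.
Import GRing.Theory.
Local Open Scope ring_scope.

(* Elements of N are represented as functions Omega -> M.
   dsum = true  : N = direct sum  (finitely supported functions)
   dsum = false : N = direct product (all functions).
   Endomorphisms are maps vec -> vec, considered only on N
   (values outside N are irrelevant; equality of endomorphisms is
   pointwise equality on N). *)
Section Defs.
Variables (R : pzRingType) (M : lmodType R) (Omega : Type).

Definition vec := Omega -> M.

Definition infinite_type : Prop := forall s : list Omega, exists i, ~ List.In i s.

Definition finsupp (v : vec) : Prop :=
  exists s : list Omega, forall i, ~ List.In i s -> v i = 0.

Definition inN (dsum : bool) (v : vec) : Prop := if dsum then finsupp v else True.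

Definition supported_on (S : Omega -> Prop) (v : vec) : Prop :=
  forall i, ~ S i -> v i = 0.

Definition inMS (dsum : bool) (S : Omega -> Prop) (v : vec) : Prop :=
  inN dsum v /\ supported_on S v.

Definition vadd (v w : vec) : vec := fun i => v i + w i.
Definition vscale (a : R) (v : vec) : vec := fun i => a *: v i.

Definition is_endo_on (P : vec -> Prop) (f : vec -> vec) : Prop :=
  (forall v, P v -> P (f v)) /\
  (forall v w, P v -> P w -> f (vadd v w) = vadd (f v) (f w)) /\
  (forall a v, P v -> f (vscale a v) = vscale a (f v)).

Definition inEnd (dsum : bool) (f : vec -> vec) : Prop := is_endo_on (inN dsum) f.

Definition stab_part (dsum : bool) (S : Omega -> Prop) (U : (vec -> vec) -> Prop)
  (f : vec -> vec) : Prop :=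
  U f /\ (forall v, inMS dsum S v -> inMS dsum S (f v)) /\
  (forall v, inMS dsum (fun i => ~ S i) v -> inMS dsum (fun i => ~ S i) (f v)).

Definition full (dsum : bool) (U : (vec -> vec) -> Prop) (S : Omega -> Prop) : Prop :=
  forall g, is_endo_on (inMS dsum S) g ->
    exists u, stab_part dsum S U u /\ forall v, inMS dsum S v -> u v = g v.

Definition moiety (S : Omega -> Prop) : Prop :=
  (exists f : {i | S i} -> Omega, bijective f) /\
  (exists f : {i | ~ S i} -> Omega, bijective f).

End Defs.

(* Main.v *)
Require Import Defs.
From mathcomp Require Import all_boot all_algebra.
From Stdlib Require Import ClassicalEpsilon FunctionalExtensionality ProofIrrelevance List.
Local Open Scope ring_scope.
Import GRing.Theory.

Definition eproj (R : pzRingType) (M : lmodType R) (Omega : Type)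
  (S : Omega -> Prop) (v : vec M Omega) : vec M Omega :=
  fun i => if excluded_middle_informative (S i) then v i else 0.
Arguments eproj {R M Omega} S v.

Definition sw (R : pzRingType) (M : lmodType R) (Omega : Type)
  (p : Omega -> Omega) (v : vec M Omega) : vec M Omega := fun i => v (p i).
Arguments sw {R M Omega} p v.

Lemma endo_comp (R : pzRingType) (M : lmodType R) (Omega : Type) (P : vec M Omega -> Prop)
  (f g : vec M Omega -> vec M Omega) :
  is_endo_on P f -> is_endo_on P g -> is_endo_on P (fun v => f (g v)).
Proof.
move=> [f1 [f2 f3]] [g1 [g2 g3]]; split; [|split].
- by move=> v Pv; apply: f1; apply: g1.
- by move=> v w Pv Pw; rewrite g2 // f2 //; apply: g1.
- by move=> a v Pv; rewrite g3 // f3 //; apply: g1.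
Qed.

Lemma eproj_end (R : pzRingType) (M : lmodType R) (Omega : Type) dsum (S : Omega -> Prop) :
  inEnd dsum (@eproj _ M _ S).
Proof.
split; [|split].
- move=> v; case: dsum => //= - [l Hl]; exists l => i Hi; rewrite /eproj.
  by case: excluded_middle_informative => ? //; apply: Hl.
- move=> v w _ _; apply: functional_extensionality => i; rewrite /eproj /vadd.
  by case: excluded_middle_informative => ? //; rewrite addr0.
- move=> a v _; apply: functional_extensionality => i; rewrite /eproj /vscale.
  by case: excluded_middle_informative => ? //; rewrite scaler0.
Qed.

Lemma sw_end (R : pzRingType) (M : lmodType R) (Omega : Type) dsum (p : Omega -> Omega) :
  (forall i, p (p i) = i) -> inEnd dsum (@sw _ M _ p).
Proof.
move=> pp; split; [|split] => //.
move=> v; case: dsum => //= - [l Hl]; exists (map p l) => i Hi; rewrite /sw; apply: Hl => Hin.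
by apply: Hi; rewrite -(pp i); apply: in_map.
Qed.

Lemma eproj_idem (R : pzRingType) (M : lmodType R) (Omega : Type) (S : Omega -> Prop) v :
  @eproj _ M _ S (eproj S v) = eproj S v.
Proof.
apply: functional_extensionality => i; rewrite /eproj.
by case: excluded_middle_informative.
Qed.

Lemma decomp (R : pzRingType) (M : lmodType R) (Omega : Type) (S : Omega -> Prop)
  (p : Omega -> Omega) :
  (forall i, p (p i) = i) -> (forall i, S (p i) <-> ~ S i) ->
  forall w : vec M Omega, w = vadd (eproj S w) (sw p (eproj S (sw p w))).
Proof.
move=> pp pS w; apply: functional_extensionality => i; rewrite /vadd /eproj /sw pp.
case: excluded_middle_informative => h1; case: excluded_middle_informative => h2.
- by exfalso; apply/(pS i): h2.
- by rewrite addr0.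
- by rewrite add0r.
- by exfalso; apply: h2; apply/(pS i).
Qed.

Lemma restr_endo (R : pzRingType) (M : lmodType R) (Omega : Type) dsum (S : Omega -> Prop)
  (h : vec M Omega -> vec M Omega) :
  inEnd dsum h -> is_endo_on (inMS dsum S) (fun w => eproj S (h w)).
Proof.
move=> hE; have [e1 [e2 e3]] := @endo_comp _ _ _ _ _ _ (eproj_end R M Omega dsum S) hE.
split; [|split].
- move=> v [Nv _]; split; first exact: e1.
  by move=> i Hi; rewrite /eproj; case: excluded_middle_informative.
- by move=> v w [Nv _] [Nw _]; apply: e2.
- by move=> a v [Nv _]; apply: e3.
Qed.

Theorem lemma1 (R : pzRingType) (M : lmodType R) (Omega : Type) (dsum : bool)
  (U : (vec M Omega -> vec M Omega) -> Prop) :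
  (exists m : M, m != 0) ->
  infinite_type Omega ->
  (forall u, U u -> inEnd dsum u) ->
  (exists S : Omega -> Prop, moiety S /\ full dsum U S) ->
  exists x y : vec M Omega -> vec M Omega,
    inEnd dsum x /\ inEnd dsum y /\
    forall f, inEnd dsum f ->
      exists u1 u2 u3 u4, U u1 /\ U u2 /\ U u3 /\ U u4 /\
        forall v, inN dsum v ->
          f v = vadd (vadd (y (u1 (y v)))           (* y u1 y     *)
                           (x (y (u2 (y v)))))      (* y u2 y x   *)
                     (vadd (y (u3 (y (x v))))       (* x y u3 y   *)
                           (x (y (u4 (y (x v)))))). (* x y u4 y x *)
Proof.
move=> _ _ _ [S [[[f1 [g1 fg1 gf1]] [f2 [g2 fg2 gf2]]] Sfull]].
pose p (i : Omega) : Omega :=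
  match excluded_middle_informative (S i) with
  | left h => proj1_sig (g2 (f1 (exist _ i h)))
  | right h => proj1_sig (g1 (f2 (exist _ i h)))
  end.
have pS : forall i, S (p i) <-> ~ S i.
  move=> i; rewrite /p; case: excluded_middle_informative => h.
  - by case: (g2 _) => j hj /=; split.
  - by case: (g1 _) => j hj /=; split => // _.
have pp : forall i, p (p i) = i.
  move=> i; rewrite {2}/p; case: excluded_middle_informative => h.
  - case E: (g2 (f1 (exist _ i h))) => [j hj] /=; rewrite /p.
    case: excluded_middle_informative => h' //.
    have -> : exist (fun k => ~ S k) j h' = g2 (f1 (exist _ i h)).
      by rewrite E; congr exist; apply: proof_irrelevance.
    by rewrite gf2 fg1.
  - case E: (g1 (f2 (exist _ i h))) => [j hj] /=; rewrite /p.
    case: excluded_middle_informative => h' //.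
    have -> : exist (fun k => S k) j h' = g1 (f2 (exist _ i h)).
      by rewrite E; congr exist; apply: proof_irrelevance.
    by rewrite gf1 fg2.
set e := @eproj _ M _ S; set s := @sw _ M _ p.
have eE : inEnd dsum e by apply: eproj_end.
have sE : inEnd dsum s by apply: sw_end.
exists s, e; split => //; split => //.
move=> f fE.
have fsE : inEnd dsum (fun w => f (s w)) by apply: endo_comp.
have sfE : inEnd dsum (fun w => s (f w)) by apply: endo_comp.
have sfsE : inEnd dsum (fun w => s (f (s w))) by apply: endo_comp.
have [u1 [[U1 _] H1]] := Sfull _ (@restr_endo _ _ _ _ S _ fE).
have [u2 [[U2 _] H2]] := Sfull _ (@restr_endo _ _ _ _ S _ sfE).
have [u3 [[U3 _] H3]] := Sfull _ (@restr_endo _ _ _ _ S _ fsE).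
have [u4 [[U4 _] H4]] := Sfull _ (@restr_endo _ _ _ _ S _ sfsE).
exists u1, u2, u3, u4; do 4 (split => //).
move=> v Nv.
have eN : forall w, inN dsum w -> inMS dsum S (e w).
  move=> w Nw; split; first by apply: (proj1 eE).
  by move=> i Hi; rewrite /e /eproj; case: excluded_middle_informative.
have sN : forall w, inN dsum w -> inN dsum (s w) by move=> w; apply: (proj1 sE).
rewrite H1; last by apply: eN.
rewrite H2; last by apply: eN.
rewrite H3; last by apply: eN; apply: sN.
rewrite H4; last by apply: eN; apply: sN.
rewrite /e !eproj_idem -/e.
have De := @decomp _ M _ S p pp pS.
rewrite {1}(De v) (proj1 (proj2 fE)); last first.
- by apply: (proj1 sE); apply: (proj1 eE); apply: sN.
- by apply: (proj1 eE).
by rewrite {1}(De (f (e v))) {1}(De (f (s (e (s v))))).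
Qed.
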